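(* Let $\phi$ be a set of total assignments of $x_1,\dots,x_n$ and $I$ a partial assignment of some of these variables. Then $F_{\phi|I}$ is unsatisfiable if and only if the 3-closure of $F_{\phi|I}$ contains the empty clause.
   Context: A literal is a variable or its negation; a clause is a set of literals; a CNF formula is a set of clauses; the empty clause is false. A clause $c$ subsumes $d$ if $c\subseteq d$. The resolvent of $(A\,x)$ and $(B\,\bar x)$ is $(A\cup B)$. A formula is closed under resolution if no clause is subsumed by another and every resolvent is subsumed by some clause; the closure $F^c$ of $F$ is the unique closed formula obtained from $F$ by adding resolvents and deleting subsumed clauses; the 3-closure of $F$ is the set of clauses of $F^c$ of size at most 3. $F^3_\phi$ is the set of all 3-clauses over $x_1,\dots,x_n$ satisfied by every element of $\phi$, and $F_\phi$ is the 3-closure of $F^3_\phi$. For a partial assignment $I$, $F_{|I}$ is obtained from $F$ by deleting clauses containing a literal true under $I$ and deleting literals false under $I$ from the remaining clauses (empty clauses remain). *)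

(* Defs.v *)
From mathcomp Require Import all_boot.
Set Implicit Arguments. Unset Strict Implicit. Unset Printing Implicit Defensive.

(* Variables x_1..x_n are 'I_n; a literal (v, true) is x_v, (v, false) is its negation. *)
Notation lit n := ('I_n * bool)%type.
Notation clause n := {set lit n}.
Notation cnf n := {set clause n}.
Notation tassign n := {ffun 'I_n -> bool}.
Notation passign n := {ffun 'I_n -> option bool}.

Definition lit_true n (a : tassign n) (l : lit n) : bool := a l.1 == l.2.
Definition csat n (a : tassign n) (c : clause n) : bool := [exists l in c, lit_true a l].
Definition fsat n (a : tassign n) (F : cnf n) : bool := [forall c in F, csat a c].
Definition satisfiable n (F : cnf n) : bool := [exists a : tassign n, fsat a F].

Definition taut_free n (c : clause n) : bool :=
  [forall v : 'I_n, ~~ (((v, true) \in c) && ((v, false) \in c))].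

Definition subsumes n (c d : clause n) : bool := c \subset d.

Definition resolvent n (c d : clause n) (v : 'I_n) : clause n :=
  (c :\ (v, true)) :|: (d :\ (v, false)).
Definition is_resolvent n (c d r : clause n) : bool :=
  [exists v : 'I_n, [&& (v, true) \in c, (v, false) \in d & r == resolvent c d v]]
  && taut_free r.

Definition closed n (G : cnf n) : bool :=
  [forall c in G, forall d in G, (subsumes c d) ==> (c == d)] &&
  [forall c in G, forall d in G, forall r : clause n,
     is_resolvent c d r ==> [exists e in G, subsumes e r]].

Definition res_closed n (G : cnf n) : bool :=
  [forall c in G, forall d in G, forall r : clause n, is_resolvent c d r ==> (r \in G)].
Definition res_star n (F : cnf n) : cnf n :=
  \bigcap_(G : cnf n | (F \subset G) && res_closed G) G.

(* the closure F^c: the subsumption-minimal derivable clauses, i.e. the result of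
   adding resolvents and deleting subsumed clauses *)
Definition closure n (F : cnf n) : cnf n :=
  [set c in res_star F | [forall d in res_star F, subsumes d c ==> (d == c)]].

Definition three_closure n (F : cnf n) : cnf n := [set c in closure F | #|c| <= 3].

Definition F3 n (phi : {set tassign n}) : cnf n :=
  [set c : clause n | [&& taut_free c, #|c| <= 3 & [forall a in phi, csat a c]]].

Definition Fphi n (phi : {set tassign n}) : cnf n := three_closure (F3 phi).

Definition lit_true_p n (I : passign n) (l : lit n) : bool := I l.1 == Some l.2.
Definition lit_false_p n (I : passign n) (l : lit n) : bool := I l.1 == Some (~~ l.2).
Definition restrict_clause n (I : passign n) (c : clause n) : clause n :=
  [set l in c | ~~ lit_false_p I l].
Definition restrict n (I : passign n) (F : cnf n) : cnf n :=
  [set restrict_clause I c | c in [set c in F | ~~ [exists l in c, lit_true_p I l]]].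

(* Main.v *)
Require Import Defs.
From mathcomp Require Import all_boot.

Section Aux.
Variable n : nat.
Implicit Types (F G : cnf n) (a : tassign n) (c d r : clause n).

Lemma res_star_sub F : F \subset res_star F.
Proof. by apply/bigcapsP => G /andP[]. Qed.

Lemma res_star_closed F : res_closed (res_star F).
Proof.
apply/forall_inP => c Hc; apply/forall_inP => d Hd; apply/forallP => r; apply/implyP => Hr.
apply/bigcapP => G HP; have /andP[_ HG] := HP.
move/bigcapP: Hc => /(_ G HP) Hc; move/bigcapP: Hd => /(_ G HP) Hd.
by move: HG => /forall_inP /(_ c Hc) /forall_inP /(_ d Hd) /forallP /(_ r) /implyP; apply.
Qed.

Lemma res_star_min F G : F \subset G -> res_closed G -> res_star F \subset G.
Proof. by move=> h1 h2; apply: bigcap_inf; rewrite h1 h2. Qed.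

Lemma resolvent_sound a c d r : csat a c -> csat a d -> is_resolvent c d r -> csat a r.
Proof.
move=> /existsP[l /andP[lc lt]] /existsP[l' /andP[ld lt']] /andP[/existsP[v /and3P[_ _ /eqP ->]] _].
apply/existsP; case av: (a v).
- exists l'; rewrite lt' andbT /resolvent !inE ld andbT orbC; apply/orP; left.
  apply/eqP => E; move: lt'; rewrite E /lit_true /= av.
  by [].
- exists l; rewrite lt andbT /resolvent !inE lc andbT; apply/orP; left.
  apply/eqP => E; move: lt; rewrite E /lit_true /= av.
  by [].
Qed.

Lemma sound F a : fsat a F -> set0 \notin res_star F.
Proof.
move=> Ha; pose S := [set c : clause n | csat a c].
have sub : res_star F \subset S.
  apply: res_star_min.
  - by apply/subsetP => c Hc; rewrite inE; move/forall_inP: Ha; apply.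
  - apply/forall_inP => c; rewrite inE => Hc; apply/forall_inP => d; rewrite inE => Hd.
    apply/forallP => r; apply/implyP => Hr; rewrite inE; exact: resolvent_sound Hr.
apply/negP => /(subsetP sub); rewrite inE => /existsP[l]; by rewrite inE.
Qed.

Definition fals k a c := [forall l in c, (l.1 < k) && ~~ lit_true a l].

Lemma init F a : set0 \notin res_star F -> forall c, c \in res_star F -> ~~ fals 0 a c.
Proof.
move=> H0 c Hc; apply/negP => /forall_inP Hf.
have E : c = set0.
  apply/setP => l; rewrite inE; apply/negP => /Hf /andP[].
  by rewrite ltn0.
by move: H0; rewrite -E Hc.
Qed.

Lemma step F k (Hk : k < n) a :
  (forall c, c \in res_star F -> ~~ fals k a c) ->
  exists a', forall c, c \in res_star F -> ~~ fals k.+1 a' c.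
Proof.
move=> Ha; set R := res_star F; set v : 'I_n := Ordinal Hk.
pose up (b : bool) : tassign n := [ffun w => if w == v then b else a w].
have agree b (l : lit n) : l.1 < k -> lit_true (up b) l = lit_true a l.
  move=> lt; rewrite /lit_true ffunE; have -> // : (l.1 == v) = false.
  by apply/negP => /eqP E; move: lt; rewrite E /= ltnn.
have lk b c (l : lit n) : fals k.+1 (up b) c -> l \in c -> l != (v, ~~ b) ->
    (l.1 < k) && ~~ lit_true a l.
  move=> /forall_inP Hf; case: l => w b' lc ne; have /andP[lt nt] := Hf _ lc.
  case: (ltnP w k) => [ltk|gek].
    by rewrite /= -(agree b (w, b')).
  have Ew : w = v by apply: val_inj; apply/eqP; rewrite eqn_leq gek andbT -ltnS.
  clear Hf lc lt; move: nt ne; rewrite Ew /lit_true ffunE eqxx /= xpair_eqE eqxx /=.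
  by case: b; case: b'.
have key b c : c \in R -> fals k.+1 (up b) c -> (v, ~~ b) \in c.
  move=> Hc Hf; apply/negPn/negP => Hn; move: (Ha c Hc); apply/negP/negPn.
  apply/forall_inP => l lc; have lc' := lc; apply: lk Hf lc _; apply/eqP => E.
  by rewrite -E lc' in Hn.
case: (boolP [forall c in R, ~~ fals k.+1 (up true) c]) => [H1|/forall_inPn [c1 Hc1 /negPn F1]].
  by exists (up true) => c Hc; move/forall_inP: H1; apply.
case: (boolP [forall c in R, ~~ fals k.+1 (up false) c]) => [H0|/forall_inPn [c0 Hc0 /negPn F0]].
  by exists (up false) => c Hc; move/forall_inP: H0; apply.
have p1 := key true c1 Hc1 F1; have p0 := key false c0 Hc0 F0.
pose r := resolvent c0 c1 v.
have hr l : l \in r -> (l.1 < k) && ~~ lit_true a l.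
  rewrite /r /resolvent !inE => /orP[/andP[ne lc]|/andP[ne lc]].
  - exact: lk F0 lc ne.
  - exact: lk F1 lc ne.
have Hr : is_resolvent c0 c1 r.
  rewrite /is_resolvent; apply/andP; split.
    by apply/existsP; exists v; rewrite p0 p1 eqxx.
  apply/forallP => w; apply/negP => /andP[h1 h2].
  have := hr _ h1; have := hr _ h2; rewrite /lit_true /=.
  by case: (a w) => /andP[_ ?] /andP[_ ?].
have rR : r \in R.
  by move: (res_star_closed F) => /forall_inP /(_ c0 Hc0) /forall_inP /(_ c1 Hc1) /forallP /(_ r) /implyP; apply.
by move: (Ha r rR); rewrite /fals; move/negP; case; apply/forall_inP.
Qed.

Lemma reach F k : k <= n -> set0 \notin res_star F ->
  exists a, forall c, c \in res_star F -> ~~ fals k a c.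
Proof.
move=> + H0; elim: k => [|k IH] Hk.
  exists [ffun => true]; exact: init H0.
have [a Ha] := IH (ltnW Hk); exact: step Hk a Ha.
Qed.

Lemma res_complete F : ~~ satisfiable F -> set0 \in res_star F.
Proof.
move=> Hu; apply/negPn/negP => H0; move: Hu; apply/negP/negPn.
have [a Ha] := @reach F n (leqnn n) H0.
apply/existsP; exists a; apply/forall_inP => c Hc.
have HcR : c \in res_star F by move/subsetP: (res_star_sub F); apply.
move: (Ha c HcR); rewrite /fals => /forall_inPn [l lc]; rewrite ltn_ord /= negbK => lt.
by apply/existsP; exists l; rewrite lc.
Qed.

End Aux.

Theorem mainTheorem4 (n : nat) (phi : {set {ffun 'I_n -> bool}})
  (I : {ffun 'I_n -> option bool}) :
  ~~ satisfiable (restrict I (Fphi phi)) <->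
  set0 \in three_closure (restrict I (Fphi phi)).
Proof.
set G := restrict I (Fphi phi).
have E : (set0 \in three_closure G) = (set0 \in res_star G).
  rewrite /three_closure /Defs.closure !inE cards0 andbT.
  case H: (set0 \in res_star G) => //=.
  by apply/forall_inP => d _; apply/implyP; rewrite /subsumes subset0.
rewrite E; split; first exact: res_complete.
move=> H; apply/negP => /existsP [a Ha].
by move: (@sound n G a Ha); rewrite H.
Qed.
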